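(* Let $A\in\mathbf{R}^{n\times n}$, $C_i\in\mathbf{R}^{m_i\times n}$ ($i=1,\ldots,N$), $H\in\mathbf{R}^{p\times n}$, and let $\mathcal{L}$ be the Laplacian of a directed graph on $N$ nodes. Set $\bar A=I_N\otimes A$, $\bar C=\mathrm{diag}[C_1,\ldots,C_N]$, $\bar H=\mathcal{L}\otimes H$. Then the pair $\left(\begin{bmatrix}\bar C\\ \bar H\end{bmatrix},\bar A\right)$ is detectable if and only if $$\bar{\mathcal{O}}\cap \prod_{i=1}^N\mathcal{C}_i=\{0\},$$ where $\mathcal{C}_i$ is the undetectable subspace of $(C_i,A)$ and $\bar{\mathcal{O}}=\bigcap_{l=1}^{nN}\operatorname{Ker}(\bar H\bar A^{l-1})$ is the unobservable subspace of $(\bar H,\bar A)$.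
   Context: Directed graph $\mathbf{G}=(\mathbf{V},\mathbf{E})$, $\mathbf{V}=\{1,\ldots,N\}$, without self-loops; $(j,i)\in\mathbf{E}$ denotes an edge from $j$ to $i$. Adjacency matrix $\mathbf{A}=[\mathbf{a}_{ij}]$ with $\mathbf{a}_{ij}=1$ if $(j,i)\in\mathbf{E}$ and $0$ otherwise; $p_i$ is the in-degree of node $i$; the Laplacian is $\mathcal{L}=\mathrm{diag}[p_1,\ldots,p_N]-\mathbf{A}$. For a matrix $F\in\mathbf{R}^{n\times n}$ with minimal polynomial $\alpha_F(s)$, factor $\alpha_F=\alpha_F^-\alpha_F^+$ where the zeros of $\alpha_F^-$ lie in the open left half-plane and those of $\alpha_F^+$ in the closed right half-plane. The undetectable subspace of a pair $(G,F)$, $G\in\mathbf{R}^{m\times n}$, is $\bigcap_{l=1}^n\operatorname{Ker}(GF^{l-1})\cap\operatorname{Ker}\alpha_F^+(F)$; the pair is detectable iff this subspace is $\{0\}$. $\prod_{i=1}^N\mathcal{C}_i\subseteq\mathbf{R}^{nN}$ denotes the set of stacked vectors $[x_1';\ldots;x_N']'$ with $x_i\in\mathcal{C}_i$. *)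

(* Defs.v *)
From HB Require Import structures.
From mathcomp Require Import all_boot all_order all_algebra.
From mathcomp Require Import complex.
Set Implicit Arguments. Unset Strict Implicit. Unset Printing Implicit Defensive.
Import Order.TTheory GRing.Theory Num.Theory.
Local Open Scope ring_scope.

(* R : rcfType (e.g. the reals); its algebraic closure is
   the complex numbers R[i] = complex R, used to locate the zeros of
   polynomials in the open left / closed right half-plane. *)

Section Defs.
Variable R : rcfType.

Definition poly_mx d (F : 'M[R]_d) (q : {poly R}) : 'M[R]_d :=
  \sum_(k < size q) q`_k *: F ^+ k.

Definition is_minpoly d (F : 'M[R]_d) (a : {poly R}) : Prop :=
  a \is monic /\ poly_mx F a = 0 /\
  (forall b : {poly R}, b != 0 -> poly_mx F b = 0 -> (size a <= size b)%N).

Definition cpoly (q : {poly R}) : {poly R[i]} :=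
  map_poly (fun r : R => (r%:C)%C) q.

(* q is alpha_F^+ : alpha_F = alpha_F^- * alpha_F^+ with alpha_F^- having
   all its (complex) zeros in the open left half plane and alpha_F^+ all
   its zeros in the closed right half plane (both factors taken monic,
   which makes the factorization unique). *)
Definition is_alpha_plus d (F : 'M[R]_d) (q : {poly R}) : Prop :=
  exists p : {poly R},
    [/\ is_minpoly F (p * q), p \is monic, q \is monic,
        (forall z : R[i], root (cpoly p) z -> Re z < 0) &
        (forall z : R[i], root (cpoly q) z -> 0 <= Re z)].

Definition undetectable m d (G : 'M[R]_(m, d)) (F : 'M[R]_d) (x : 'cV[R]_d)
  : Prop :=
  (forall l : nat, (l < d)%N -> G *m F ^+ l *m x = 0) /\
  exists q, is_alpha_plus F q /\ poly_mx F q *m x = 0.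

Definition detectable m d (G : 'M[R]_(m, d)) (F : 'M[R]_d) : Prop :=
  forall x, undetectable G F x -> x = 0.

End Defs.

(* Laplacian of the directed graph on 'I_N with edge relation E,
   E j i meaning (j,i) in the edge set (edge from j to i).
   a_ij = 1 iff E j i ;  p_i = in-degree of i ;  L = diag(p) - A. *)
Definition adj_entry (R : pzRingType) N (E : rel 'I_N) (i j : 'I_N) : R :=
  (E j i)%:R.
Definition indeg N (E : rel 'I_N) (i : 'I_N) : nat := #|[pred j | E j i]|.
Definition laplacian (R : pzRingType) N (E : rel 'I_N) : 'M[R]_N :=
  \matrix_(i, j) ((i == j)%:R * (indeg E i)%:R - adj_entry R E i j).

(* Main.v *)
Require Import Defs.
From HB Require Import structures.
From mathcomp Require Import all_boot all_order all_algebra.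
From mathcomp Require Import complex.
Import Order.TTheory GRing.Theory Num.Theory.
Local Open Scope ring_scope.
Set Implicit Arguments. Unset Strict Implicit.

Lemma poly_mxE (R : rcfType) d (F : 'M[R]_d.+1) q : poly_mx F q = horner_mx F q.
Proof.
rewrite /poly_mx /horner_mx /horner_morph /map_poly horner_poly.
by apply: eq_bigr => k _; rewrite -mul_scalar_mx mulmxE.
Qed.

Lemma poly_mx_mul (R : rcfType) d (F : 'M[R]_d) a b :
  poly_mx F (a * b) = poly_mx F a * poly_mx F b.
Proof.
case: d F => [|d] F; first by apply/matrixP => [[]].
by rewrite !poly_mxE rmorphM.
Qed.

Lemma poly_mx_add (R : rcfType) d (F : 'M[R]_d) a b :
  poly_mx F (a + b) = poly_mx F a + poly_mx F b.
Proof.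
case: d F => [|d] F; first by apply/matrixP => [[]].
by rewrite !poly_mxE rmorphD.
Qed.

Section Alg.
Context {R : rcfType}.

Lemma minpoly_dvd d (F : 'M[R]_d) a b :
  is_minpoly F a -> poly_mx F b = 0 -> a %| b.
Proof.
case=> am [a0 amin] b0.
have an0 : a != 0 := monic_neq0 am.
apply/modp_eq0P; apply/eqP; apply: contraT => nz.
have H0 : poly_mx F (b %% a) = 0.
  have := congr1 (poly_mx F) (divp_eq b a).
  by rewrite poly_mx_add poly_mx_mul a0 mulr0 add0r b0.
have := amin _ nz H0; rewrite leqNgt ltn_modp an0.
by [].
Qed.

Lemma coprime_ap (p q : {poly R}) : q \is monic ->
  (forall z : R[i], root (cpoly p) z -> Re z < 0) ->
  (forall z : R[i], root (cpoly q) z -> 0 <= Re z) -> coprimep q p.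
Proof.
move=> qm pneg qpos; rewrite coprimep_def; apply: contraT => Hs.
have [z Hz] : exists z, root (cpoly (gcdp q p)) z.
  by apply/closed_rootP; rewrite /cpoly size_map_poly.
have rq : root (cpoly q) z.
  apply: root_dvdp Hz; rewrite /cpoly dvdp_map; exact: dvdp_gcdl.
have rp : root (cpoly p) z.
  apply: root_dvdp Hz; rewrite /cpoly dvdp_map; exact: dvdp_gcdr.
by have := lt_le_trans (pneg z rp) (qpos z rq); rewrite ltxx.
Qed.

Lemma alpha_dvd d (F : 'M[R]_d) q q' :
  is_alpha_plus F q -> is_alpha_plus F q' -> q' %| q.
Proof.
move=> [p [mpq pm qm pneg qpos]] [p' [mpq' pm' qm' pneg' qpos']].
have h : p' * q' %| p * q.
  apply: (minpoly_dvd mpq'); by case: mpq => _ [].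
have h2 : q' %| p * q := dvdp_trans (dvdp_mulIr p' q') h.
by rewrite Gauss_dvdpr // in h2; apply: coprime_ap.
Qed.

Lemma alpha_transfer d1 d2 (F1 : 'M[R]_d1) (F2 : 'M[R]_d2) q :
  (forall b, poly_mx F1 b = 0 <-> poly_mx F2 b = 0) ->
  is_alpha_plus F1 q -> is_alpha_plus F2 q.
Proof.
move=> E [p [[mm [m0 mmin]] pm qm pneg qpos]]; exists p; split => //.
split => //; split; first by apply/E.
by move=> b bn0 /E; apply: mmin.
Qed.

Lemma CH_ext n (A : 'M[R]_n) m (G : 'M[R]_(m, n)) (x : 'cV[R]_n) :
  (forall l, (l < n)%N -> G *m A ^+ l *m x = 0) ->
  forall l, G *m A ^+ l *m x = 0.
Proof.
case: n A G x => [|n] A G x H l.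
  by rewrite [G *m _]thinmx0 mul0mx.
elim/ltn_ind: l => l IH.
case: (ltnP l n.+1) => [lt|ge]; first exact: H.
have e0 : poly_mx A (char_poly A) = 0 by rewrite poly_mxE Cayley_Hamilton.
have : G *m A ^+ (l - n.+1) *m poly_mx A (char_poly A) *m x = 0.
  by rewrite e0 mulmx0 mul0mx.
have c1 : (char_poly A)`_n.+1 = 1.
  by have := char_poly_monic A; rewrite monicE /lead_coef size_char_poly => /eqP.
rewrite /poly_mx size_char_poly big_ord_recr /= c1 scale1r.
rewrite mulmxDr mulmxDl mulmx_sumr mulmx_suml big1 ?add0r.
  by rewrite -(mulmxA G) mulmxE -exprD subnK.
move=> k _; rewrite -scalemxAr -scalemxAl -(mulmxA G) mulmxE -exprD.
by rewrite IH ?scaler0 // -{2}(subnK ge) ltn_add2l.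
Qed.

End Alg.

Section Blocks.
Context {R : rcfType} {N n : nat}.

Lemma submxcolZ (p_ : 'I_N -> nat) k a (B : 'M[R]_(\sum_(i < N) p_ i, k)) i :
  submxcol (a *: B) i = a *: submxcol B i.
Proof. by apply/matrixP => r c; rewrite !mxE. Qed.

Lemma mxcol_zero (p_ : 'I_N -> nat) k (B : 'M[R]_(\sum_(i < N) p_ i, k)) :
  (forall i, submxcol B i = 0) -> B = 0.
Proof. by move=> H; rewrite -(submxcolK B) (eq_mxcol H) mxcol0. Qed.

Variable A : 'M[R]_n.
Let Abar : 'M[R]_(\sum_(i < N) n) := \mxdiag_(i < N) A.

Lemma submx_Abar k (Y : 'M[R]_(\sum_(i < N) n, k)) i :
  submxcol (Abar *m Y) i = A *m submxcol Y i.
Proof. by rewrite -[Y in LHS]submxcolK mul_mxdiag_mxcol mxcolK. Qed.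

Lemma submx_Abarpow l k (Y : 'M[R]_(\sum_(i < N) n, k)) i :
  submxcol (Abar ^+ l *m Y) i = A ^+ l *m submxcol Y i.
Proof.
elim: l => [|l IH]; first by rewrite !expr0 !mul1mx.
by rewrite !exprS -!mulmxE -!mulmxA submx_Abar IH.
Qed.

Lemma submx_polyAbar q k (Y : 'M[R]_(\sum_(i < N) n, k)) i :
  submxcol (poly_mx Abar q *m Y) i = poly_mx A q *m submxcol Y i.
Proof.
rewrite /poly_mx !mulmx_suml submxcol_sum; apply: eq_bigr => j _.
by rewrite -!scalemxAl submxcolZ submx_Abarpow.
Qed.

Lemma polyAbar0 (i0 : 'I_N) b : poly_mx Abar b = 0 <-> poly_mx A b = 0.
Proof.
split=> h.
  have := congr1 (fun M => submxcol M i0)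
     (congr1 (mulmx^~ (\mxcol_(j < N) (1%:M : 'M[R]_n))) h).
  by rewrite /= submx_polyAbar mxcolK mulmx1 mul0mx submxcol0.
rewrite -[LHS]mulmx1; apply: mxcol_zero => i.
by rewrite submx_polyAbar h mul0mx.
Qed.

End Blocks.

Lemma submx_Cbar {R : rcfType} {N n : nat} (m : 'I_N -> nat)
  (C : forall i : 'I_N, 'M[R]_(m i, n)) k (Y : 'M[R]_(\sum_(i < N) n, k)) i :
  submxcol (\mxblock_(i < N, j < N) (if i == j then C i else 0) *m Y) i
  = C i *m submxcol Y i.
Proof.
rewrite -[Y in LHS]submxcolK mul_mxblock_mxrow mxcolK (bigD1 i) //= eqxx.
by rewrite big1 ?addr0 // => j /negbTE ji; rewrite eq_sym ji mul0mx.
Qed.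

Unset Implicit Arguments.

Theorem lemma1 (R : rcfType) (n N p : nat) (m : 'I_N -> nat)
  (A : 'M[R]_n) (C : forall i : 'I_N, 'M[R]_(m i, n)) (H : 'M[R]_(p, n))
  (E : rel 'I_N) (noloop : irreflexive E) :
  let Abar : 'M[R]_(\sum_(i < N) n) := \mxdiag_(i < N) A in
  let Cbar : 'M[R]_(\sum_(i < N) m i, \sum_(i < N) n) :=
    \mxblock_(i < N, j < N) (if i == j then C i else 0)
    in
  let Hbar : 'M[R]_(\sum_(i < N) p, \sum_(i < N) n) :=
    \mxblock_(i < N, j < N) (laplacian R E i j *: H) in
  detectable (col_mx Cbar Hbar) Abar <->
  (forall x : 'cV[R]_(\sum_(i < N) n),
     (forall l : nat, (l < n * N)%N -> Hbar *m Abar ^+ l *m x = 0) ->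
     (forall i : 'I_N, undetectable (C i) A (submxcol x i)) ->
     x = 0).
Proof.
move=> Abar Cbar Hbar.
have Hs : (\sum_(i < N) n = n * N)%N by rewrite sum_nat_const card_ord mulnC.
split.
- move=> Det x Hx Hi.
  have [Nz|Npos] := posnP N.
    apply/matrixP => r c; have h : (r < n * N)%N by rewrite -Hs.
    have e : (n * N = 0)%N by rewrite Nz muln0.
    by rewrite e in h.
  pose i0 : 'I_N := Ordinal Npos.
  apply: Det; split.
    move=> l Hl; rewrite -mulmxA mul_col_mx; apply/eqP.
    rewrite col_mx_eq0; apply/andP; split; apply/eqP; last first.
      by rewrite mulmxA Hx // -Hs.
    apply: mxcol_zero => i.
    rewrite /Cbar submx_Cbar /Abar submx_Abarpow mulmxA.
    by case: (Hi i) => hC _; apply: CH_ext.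
  case: (Hi i0) => _ [q [aq _]]; exists q; split.
    by apply: alpha_transfer aq => b; apply: iff_sym; exact: (polyAbar0 A i0 b).
  apply: mxcol_zero => i; rewrite /Abar submx_polyAbar.
  case: (Hi i) => _ [qi [aqi hqi]].
  have /dvdpP [r ->] := alpha_dvd aq aqi.
  by rewrite poly_mx_mul -mulmxE -mulmxA hqi mulmx0.
- move=> RH x [Hl [q [aq hq]]]; apply: RH.
    move=> l lt; have lt' : (l < \sum_(i < N) n)%N by rewrite Hs.
    have := Hl l lt'.
    rewrite -mulmxA mul_col_mx => /eqP; rewrite col_mx_eq0 => /andP [_ /eqP].
    by rewrite mulmxA.
  move=> i; split.
    move=> l lt.
    have Npos : (0 < N)%N by apply: leq_ltn_trans (ltn_ord i).
    have lt' : (l < \sum_(i < N) n)%N.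
      by rewrite Hs; apply: leq_trans lt (leq_pmulr _ Npos).
    have := Hl l lt'.
    rewrite -mulmxA mul_col_mx => /eqP; rewrite col_mx_eq0 => /andP [/eqP h _].
    have := congr1 (fun M => submxcol M i) h.
    by rewrite /= /Cbar submx_Cbar /Abar submx_Abarpow submxcol0 mulmxA.
  exists q; split.
    by apply: alpha_transfer aq => b; exact: (polyAbar0 A i b).
  have := congr1 (fun M => submxcol M i) hq.
  by rewrite /= /Abar submx_polyAbar submxcol0.
Qed.
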